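(* Let $\Gamma$ be an oriented Jordan smooth curve and $\alpha:\Gamma\to\Gamma$ a homeomorphism with nonempty set $\Lambda$ of periodic points. (a) If $Y$ is finite, there is a finite decomposition $\Gamma=\big(\bigcup_i\overline{\omega_i}\big)\cup\big(\bigcup_j\overline{\gamma_j}\big)$, where $\omega_i\subset\Gamma\setminus\Phi$ and $\gamma_j\subset\Phi\setminus\Lambda$ are pairwise disjoint $\alpha_m$-invariant open arcs with endpoints in $Y$. (b) Let $f:\Gamma\to\mathbb R$ be continuous. If $Y$ is infinite and $f(\tau)>0$ for all $\tau\in Y'$, then there is a finite decomposition $\Gamma=\big(\bigcup_i\overline{\omega_i}\big)\cup\big(\bigcup_j\overline{\gamma_j}\big)\cup\big(\bigcup_k\overline{v_k}\big)$, where $\omega_i\subset\Gamma\setminus\Phi$, $\gamma_j\subset\Phi\setminus\Lambda$, $v_k\subset\Gamma$ are pairwise disjoint $\alpha_m$-invariant open arcs with endpoints in $Y$, $\overline{v_k}\cap Y'\ne\emptyset$, and $f(t)>0$ for all $t\in\overline{v_k}$ and all $k$.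
   Context: $\alpha_0=\mathrm{id}$, $\alpha_n=\alpha\circ\alpha_{n-1}$. A point $\tau$ is periodic of multiplicity $m$ if $\alpha_m(\tau)=\tau$ and $\alpha_j(\tau)\ne\tau$ for $1\le j<m$. If $\alpha$ preserves the orientation, all periodic points have a common multiplicity $m$; if $\alpha$ changes the orientation, set $m=2$. Then $\Lambda$ is the set of fixed points of $\alpha_m$. $\Phi=\overline{\{t\in\Gamma:\alpha_m(t)\ne t\}}$, $Y=\Lambda\cap\Phi$ (the boundary of $\Lambda$), $Y'$ the set of limit points of $Y$. *)

(* Defs.v *)
From HB Require Import structures.
From mathcomp Require Import all_boot all_order all_algebra.
From mathcomp Require Import all_classical all_reals all_analysis.
Set Implicit Arguments. Unset Strict Implicit. Unset Printing Implicit Defensive.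
Import Order.TTheory GRing.Theory Num.Theory.
Import numFieldNormedType.Exports.
Local Open Scope classical_set_scope.
Local Open Scope ring_scope.

Section Defs.
Variable R : realType.
Notation P := (R * R)%type.

Definition param (x y : R -> R) : R -> P := fun t => (x t, y t).

(* Gamma is an oriented smooth Jordan curve, given by a 1-periodic C^1
   parametrization with nowhere-vanishing derivative, injective on [0,1);
   the orientation is the one of increasing parameter. *)
Definition smooth_jordan_param (x y : R -> R) : Prop :=
  [/\ (forall t, x (t + 1) = x t /\ y (t + 1) = y t),
      (forall s t, 0 <= s < 1 -> 0 <= t < 1 -> param x y s = param x y t -> s = t),
      (forall t, derivable x t 1 /\ derivable y t 1),
      continuous (derive1 x) /\ continuous (derive1 y) &
      (forall t, (derive1 x t, derive1 y t) != (0, 0))].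

Definition curve (x y : R -> R) : set P := range (param x y).

Definition pos_cyclic (x y : R -> R) (a b c : P) : Prop :=
  exists s1 s2 s3, [/\ s1 < s2, s2 < s3 & s3 < s1 + 1] /\
    [/\ param x y s1 = a, param x y s2 = b & param x y s3 = c].

Definition homeo_on (G : set P) (alpha : P -> P) : Prop :=
  exists beta : P -> P,
    [/\ (forall t, G t -> G (alpha t)), (forall t, G t -> G (beta t)),
        (forall t, G t -> beta (alpha t) = t) & (forall t, G t -> alpha (beta t) = t)] /\
    ({within G, continuous alpha} /\ {within G, continuous beta}).

Definition preserves_orientation (x y : R -> R) (alpha : P -> P) : Prop :=
  forall a b c, pos_cyclic x y a b c ->
    pos_cyclic x y (alpha a) (alpha b) (alpha c).

(* alpha_n = iter n alpha ; tau is periodic of multiplicity n *)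
Definition periodic_mult (alpha : P -> P) (n : nat) (tau : P) : Prop :=
  (0 < n)%N /\ iter n alpha tau = tau /\
  (forall j, (0 < j < n)%N -> iter j alpha tau <> tau).

Definition periodic_points (G : set P) (alpha : P -> P) : set P :=
  [set tau | G tau /\ exists n, periodic_mult alpha n tau].

Definition is_shift_order (x y : R -> R) (alpha : P -> P) (m : nat) : Prop :=
  (preserves_orientation x y alpha ->
     exists tau, curve x y tau /\ periodic_mult alpha m tau) /\
  (~ preserves_orientation x y alpha -> m = 2%N).

Definition Lambda (G : set P) (alpha : P -> P) (m : nat) : set P :=
  [set t | G t /\ iter m alpha t = t].

Definition Phi (G : set P) (alpha : P -> P) (m : nat) : set P :=
  closure [set t | G t /\ iter m alpha t <> t].

Definition Ybd (G : set P) (alpha : P -> P) (m : nat) : set P :=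
  Lambda G alpha m `&` Phi G alpha m.

(* A is the open arc of Gamma going (in the positive direction) from a to b;
   a = b is allowed and then A = Gamma \ {a}. *)
Definition open_arc (x y : R -> R) (a b : P) (A : set P) : Prop :=
  exists s t, [/\ s < t, t <= s + 1, param x y s = a, param x y t = b &
    A = param x y @` [set u | s < u < t]].

Definition arc_ends_in (x y : R -> R) (Y : set P) (A : set P) : Prop :=
  exists a b, [/\ Y a, Y b & open_arc x y a b A].

Definition shift_invariant (h : P -> P) (A : set P) : Prop := h @` A = A.

Definition pairwise_disjoint (L : seq (set P)) : Prop :=
  forall i j, (i < size L)%N -> (j < size L)%N -> i <> j ->
    nth set0 L i `&` nth set0 L j = set0.

Definition union_closures (L : seq (set P)) : set P :=
  [set t | exists2 A, A \in L & closure A t].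

End Defs.

(* Main.v *)
Require Import Defs.
From HB Require Import structures.
From mathcomp Require Import all_boot all_order all_algebra.
From mathcomp Require Import all_classical all_reals all_analysis.
From mathcomp Require Import zify ring lra.
Import Order.TTheory GRing.Theory Num.Theory.
Import numFieldNormedType.Exports.
Local Open Scope classical_set_scope.
Local Open Scope ring_scope.
Set Implicit Arguments. Unset Strict Implicit.


Section Circle.
Variable R : realType.
Variables x y : R -> R.
Hypothesis HJ : smooth_jordan_param x y.
Local Notation F := (param x y).
Local Notation G := (curve x y).

Lemma F_cont : continuous F.
Proof.
case: HJ => _ _ Hd _ _ t.
apply: (@cvg_pair _ _ _ _ (nbhs (x t)) (nbhs (y t))).
- apply: differentiable_continuous; apply/derivable1_diffP; exact: (Hd t).1.
- apply: differentiable_continuous; apply/derivable1_diffP; exact: (Hd t).2.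
Qed.

Lemma F1 t : F (t + 1) = F t.
Proof. by case: HJ => H _ _ _ _; rewrite /param; case: (H t) => -> ->. Qed.

Lemma Fn t (n : nat) : F (t + n%:R) = F t.
Proof.
elim: n => [|n IH]; first by rewrite addr0.
by rewrite -natr1 addrA F1.
Qed.

Lemma Fz t (k : int) : F (t + k%:~R) = F t.
Proof.
case: k => n; first by rewrite Fn.
rewrite NegzE mulrNz -(Fn (t + - (n.+1)%:R) n.+1) -addrA addNr addr0 //.
Qed.

Lemma shift_win (s0 t : R) : exists k : int, s0 <= t + k%:~R < s0 + 1.
Proof.
exists (- Num.floor (t - s0)).
have := floor_itv (t - s0); rewrite mulrNz intrD /=.
move=> /andP[h1 h2]; apply/andP; split; lra.
Qed.

Lemma Finj01 (s t : R) : 0 <= s < 1 -> 0 <= t < 1 -> F s = F t -> s = t.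
Proof. by case: HJ => _ H _ _ _; apply: H. Qed.

Lemma Feq (s t : R) : F s = F t -> exists k : int, s = t + k%:~R.
Proof.
move=> e.
have [k1 /andP[h1 h2]] := shift_win 0 s.
have [k2 /andP[h3 h4]] := shift_win 0 t.
have : s + k1%:~R = t + k2%:~R.
  apply: Finj01; [apply/andP; split; lra|apply/andP; split; lra|by rewrite !Fz].
move=> e2; exists (k2 - k1); rewrite intrD mulrNz; lra.
Qed.

Lemma Finj_win (s0 s t : R) : s0 <= s < s0 + 1 -> s0 <= t < s0 + 1 -> F s = F t -> s = t.
Proof.
move=> /andP[h1 h2] /andP[h3 h4] /Feq [k e].
have k0 : k = 0.
  have a : k%:~R < (1:int)%:~R :> R by rewrite -[(1:int)%:~R]/(1:R); lra.
  have b : (-1:int)%:~R < k%:~R :> R by rewrite intrN -[(1:int)%:~R]/(1:R); lra.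
  rewrite ltr_int in a; rewrite ltr_int in b. lia.
by rewrite e k0 addr0.
Qed.

Lemma G_win (s0 : R) p : G p -> exists2 t, s0 <= t < s0 + 1 & F t = p.
Proof.
case=> t _ <-; have [k hk] := shift_win s0 t.
by exists (t + k%:~R) => //; rewrite Fz.
Qed.

End Circle.


Section Part.
Variable R : realType.

Lemma ballR (c e t : R) : ball c e t = (`|c - t| < e).
Proof. by rewrite -ball_normE. Qed.

Lemma closedR (Z : set R) d : closed Z ->
  (forall e, 0 < e -> exists z, Z z /\ `|z - d| < e) -> Z d.
Proof.
move=> cZ H; rewrite (closure_id Z).1 //.
move=> B /nbhs_ballP [e e0 hB]; have [z [Zz hz]] := H e e0.
exists z; split => //; apply: hB; rewrite ballR distrC //.
Qed.

Lemma lpR (Z : set R) u :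
  (forall e, 0 < e -> exists z, [/\ Z z, z != u & `|z - u| < e]) -> limit_point Z u.
Proof.
move=> H B /nbhs_ballP [e e0 hB]; have [z [Zz zu hz]] := H e e0.
exists z; split => //; apply: hB; rewrite ballR distrC //.
Qed.

Lemma inf_le (E : set R) z : has_lbound E -> E z -> inf E <= z.
Proof. by move=> h Ez; apply: (ge_inf h). Qed.

Definition valid (Z Pos : set R) (p : R * R) :=
  (forall t, p.1 < t < p.2 -> ~ Z t) \/
  ((forall t, p.1 <= t <= p.2 -> Pos t) /\ exists2 u, p.1 <= u <= p.2 & limit_point Z u).

Definition GoodL (Z Pos : set R) (s0 q : R) (L : seq (R * R)) :=
  [/\ forall p, p \in L -> [/\ s0 <= p.1, p.1 < p.2, p.2 <= q, Z p.1 /\ Z p.2 & valid Z Pos p],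
      forall p r, p \in L -> r \in L -> p != r -> forall t, p.1 < t < p.2 -> r.1 < t < r.2 -> False &
      forall t, s0 < t <= q -> exists2 p, p \in L & p.1 < t <= p.2].

Lemma GoodL_ext Z Pos s0 q q' L : GoodL Z Pos s0 q L -> s0 <= q -> q < q' -> Z q -> Z q' ->
  valid Z Pos (q, q') -> GoodL Z Pos s0 q' ((q, q') :: L).
Proof.
move=> [h1 h2 h3] s0q qq' Zq Zq' v; split.
- move=> p; rewrite in_cons => /orP[/eqP -> | pL] /=; first by split => //.
  have [a b c d e] := h1 p pL; split => //; lra.
- move=> p r; rewrite !in_cons => /orP[/eqP -> | pL] /orP[/eqP -> | rL] //=.
  + by rewrite eqxx.
  + move=> _ t /andP[a b] /andP[c d]; have [_ _ e _ _] := h1 r rL; lra.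
  + move=> _ t /andP[a b] /andP[c d]; have [_ _ e _ _] := h1 p pL; lra.
  + exact: h2.
- move=> t /andP[a b]; have [tq | qt] := leP t q.
  + have [|p pL hp] := h3 t; first lra.
    by exists p => //; rewrite in_cons pL orbT.
  + by exists (q, q') => /=; [rewrite mem_head | lra].
Qed.

Lemma partitionR (Z Pos : set R) (s0 s1 : R) : closed Z -> Z s0 -> Z s1 -> s0 <= s1 ->
  (forall u, limit_point Z u -> exists2 d, 0 < d & forall t, `|t - u| < d -> Pos t) ->
  exists L, GoodL Z Pos s0 s1 L.
Proof.
move=> cZ Z0 Z1 s01 H.
pose T := [set q | [/\ Z q, s0 <= q <= s1 & exists L, GoodL Z Pos s0 q L]].
have T0 : T s0.
  split => //; first lra.
  exists [::]; split => //; move=> t; lra.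
have hsT : has_sup T.
  split; first by exists s0.
  by exists s1; rewrite /ubound /= => q [_ /andP[_ ?] _].
pose c := sup T.
have c0 : s0 <= c by apply: sup_upper_bound.
have c1 : c <= s1 by apply: ge_sup; [exists s0 | rewrite /ubound /= => q [_ /andP[_ ?] _]].
have Zc : Z c.
  apply: closedR => // e e0; have [q Tq hq] := sup_adherent e0 hsT.
  have qc : q <= c by apply: sup_upper_bound.
  case: Tq => Zq _ _; exists q; split => //.
  rewrite -/c in hq; rewrite ler0_norm; lra.
have [Lc GLc] : exists L, GoodL Z Pos s0 c L.
  have [[_ _ //] | nTc] := pselect (T c).
  have lpc : limit_point Z c.
    apply: lpR => e e0; have [q Tq hq] := sup_adherent e0 hsT.
    have qc : q <= c by apply: sup_upper_bound.
    have qnc : q != c by apply/eqP => qc'; apply: nTc; rewrite -qc'.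
    case: Tq => Zq _ _; exists q; split => //; rewrite -/c in hq.
    rewrite ler0_norm; lra.
  have [d d0 hd] := H c lpc.
  have [q Tq hq] := sup_adherent d0 hsT; rewrite -/c in hq.
  have qc : q <= c by apply: sup_upper_bound.
  have qnc : q != c by apply/eqP => qc'; apply: nTc; rewrite -qc'.
  case: Tq => Zq /andP[q0 q1] [L GL].
  exists ((q, c) :: L); apply: GoodL_ext => //; first by rewrite lt_neqAle qnc.
  right; split => /=; last by exists c => //; rewrite qc lexx.
  move=> t /andP[a b]; apply: hd; rewrite ler0_norm; lra.
have cs1 : c = s1.
  apply/eqP; rewrite eq_le c1 /=; rewrite leNgt; apply/negP => cs.
  pose D := [set z | Z z /\ c < z <= s1].
  have D1 : D s1 by split => //; rewrite cs lexx.
  have hiD : has_inf D by split; [exists s1 | exists c; rewrite /lbound /= => z [_ /andP[? _]]; lra].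
  pose d := inf D.
  have cd : c <= d by apply: lb_le_inf; [exists s1 | rewrite /lbound /= => z [_ /andP[? _]]; lra].
  have ds1 : d <= s1 by apply: ge_inf; [exists c; rewrite /lbound /= => z [_ /andP[? _]]; lra|].
  have noT : forall z, c < z -> T z -> False.
    move=> z cz Tz; have : z <= c by apply: sup_upper_bound.

    lra.
  have [cd' | dc] := ltP c d.
  - have Zd : Z d.
      apply: closedR => // e e0; have [z Dz hz] := inf_adherent e0 hiD.
      have dz : d <= z by apply: inf_le Dz; exists c; rewrite /lbound /= => w [_ /andP[? _]]; lra.
      exists z; case: Dz => Zz _; split => //.
      rewrite -/d in hz; rewrite ger0_norm; lra.
    apply: (noT d cd'); split => //; first lra.
    exists ((c, d) :: Lc); apply: GoodL_ext => //.
    left => t /= /andP[a b] Zt.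
    have : d <= t.
      apply: inf_le; first by exists c; rewrite /lbound /= => w [_ /andP[? _]]; lra.
      by split => //; lra.
    lra.
  - have dc' : d = c by apply/eqP; rewrite eq_le dc cd.
    have lpc : limit_point Z c.
      apply: lpR => e e0; have [z Dz hz] := inf_adherent e0 hiD.
      case: Dz => Zz /andP[cz zs]; exists z; split => //.
      + by rewrite gt_eqF.
      + rewrite -/d dc' in hz; rewrite ger0_norm; lra.
    have [dl dl0 hd] := H c lpc.
    have [z Dz hz] := inf_adherent dl0 hiD; rewrite -/d dc' in hz.
    case: Dz => Zz /andP[cz zs].
    apply: (noT z cz); split => //; first lra.
    exists ((c, z) :: Lc); apply: GoodL_ext => //.
    right; split => /=; last by exists c => //; rewrite lexx ltW.
    move=> t /andP[a b]; apply: hd; rewrite ger0_norm; lra.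
by exists Lc; rewrite -cs1.
Qed.

End Part.


Section Topo.
Variable R : realType.
Local Notation P := (R * R)%type.

Lemma hausP : hausdorff_space P.
Proof. exact: norm_hausdorff. Qed.

Lemma closed_eqz (f g : R -> P) : continuous f -> continuous g ->
  closed [set u | f u = g u].
Proof.
move=> cf cg; apply/closure_id; apply/seteqP; split; first exact: subset_closure.
move=> u cu; apply/eqP/negPn/negP => /eqP fg.
have : ~ cluster (nbhs (f u)) (g u) by move=> /hausP.
move=> /existsNP [A /existsNP [B /not_implyP [nA /not_implyP [nB /set0P/negP/negPn/eqP AB]]]].
have [v [fv Av]] : exists v, f v = g v /\ (f @^-1` A `&` g @^-1` B) v.
  have : nbhs u (f @^-1` A `&` g @^-1` B).
    by apply: filterI; [apply: cf | apply: cg].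
  by move=> /cu [v [hv1 hv2]]; exists v.
have : (A `&` B) (f v) by case: Av => a b; split => //; rewrite fv.
by rewrite AB.
Qed.

Lemma conn_R (a b : R) (S U1 U2 : set R) : closed U1 -> closed U2 ->
  (forall u, a < u < b -> (S u <-> ~ U1 u)) -> (forall u, a < u < b -> (S u <-> U2 u)) ->
  (exists u, a < u < b /\ S u) -> forall u, a < u < b -> S u.
Proof.
move=> c1 c2 h1 h2 [u0 [hu0 Su0]].
pose I := [set u : R | a < u < b].
have cI : connected I.
  apply/connected_intervalP => p q /andP[? ?] /andP[? ?] z /andP[? ?].
  rewrite /I /=; apply/andP; split; lra.
have e : I `&` S = I.
  apply: cI.
  - by exists u0.
  - exists (~` U1); first exact: closed_openC.
    apply/seteqP; split => v [Iv hv]; split => //; first exact/(h1 v Iv).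
    exact/(h1 v Iv).
  - exists U2 => //.
    apply/seteqP; split => v [Iv hv]; split => //; first exact/(h2 v Iv).
    exact/(h2 v Iv).
move=> u hu; have : I u by [].
by rewrite -e => -[].
Qed.

Lemma compW (G : set P) (g : P -> P) (h : R -> P) : continuous h ->
  (forall u, G (h u)) -> {within G, continuous g} -> continuous (g \o h).
Proof.
move=> ch hG cg u.
have := (subspace_continuousP _ _).1 cg (h u) (hG u).
apply: cvg_comp; intros W hW.
have : nbhs (h u) [set z | G z -> W z] by exact: hW.
move=> H1; have H2 : nbhs u (h @^-1` [set z | G z -> W z]) by apply: ch.
apply: (filterS _ H2) => v /= hv; exact: hv.
Qed.

End Topo.


Section Arcs.
Variable R : realType.
Variables x y : R -> R.
Hypothesis HJ : smooth_jordan_param x y.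
Local Notation F := (param x y).
Local Notation G := (curve x y).
Local Notation P := (R * R)%type.

Definition oarc (a b : R) : set P := F @` [set u | a < u < b].
Definition clarc (a b : R) : set P := F @` [set u | a <= u <= b].

Lemma F_G u : G (F u).
Proof. by exists u. Qed.

Lemma closed_carc (a b : R) : closed (clarc a b).
Proof.
apply: compact_closed; first exact: hausP.
apply: continuous_compact; last first.
  have -> : [set u : R | a <= u <= b] = `[a, b]%classic.
    by apply/seteqP; split => u; rewrite /= in_itv.
  exact: segment_compact.
apply: continuous_subspaceT => u; exact: F_cont.
Qed.

Lemma arc_shift (a b : R) : oarc (a + 1) (b + 1) = oarc a b.
Proof.
apply/seteqP; split => p [u hu <-].
- exists (u - 1); first by move: hu => /andP[? ?]; apply/andP; split; lra.
  by rewrite -(F1 HJ (u - 1)) subrK.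
- exists (u + 1); first by move: hu => /andP[? ?]; apply/andP; split; lra.
  by rewrite F1.
Qed.

Lemma split3 (a b : R) p : a < b <= a + 1 -> G p ->
  [\/ p = F a, p = F b, oarc a b p | oarc b (a + 1) p].
Proof.
move=> /andP[ab ba] /(G_win HJ a) [t /andP[t1 t2] <-].
have [ta | at'] := eqVneq t a; first by rewrite ta; apply: Or41.
have [tb | bt] := eqVneq t b; first by rewrite tb; apply: Or42.
have [tb' | bt'] := ltP t b.
- by apply: Or43; exists t => //; apply/andP; split => //; rewrite lt_neqAle eq_sym at' t1.
- by apply: Or44; exists t => //; apply/andP; split => //; rewrite lt_neqAle eq_sym bt bt'.
Qed.

Lemma arc_not_end (a b : R) p : a < b <= a + 1 -> oarc a b p -> p <> F a /\ p <> F b.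
Proof.
move=> /andP[ab ba] [s /andP[s1 s2] <-]; split.
- move=> /(Finj_win HJ (s0:=a)) h; have : s = a by apply: h; apply/andP; split; lra.
  lra.
- have [bl | be] := ltP b (a + 1).
  + move=> /(Finj_win HJ (s0:=a)) h; have : s = b by apply: h; apply/andP; split; lra.
    lra.
  + have -> : b = a + 1 by apply/eqP; rewrite eq_le ba be.
    rewrite F1 // => /(Finj_win HJ (s0:=a)) h; have : s = a by apply: h; apply/andP; split; lra.
    lra.
Qed.

Lemma arc_disj (a b : R) p : a < b <= a + 1 -> oarc a b p -> oarc b (a + 1) p -> False.
Proof.
move=> /andP[ab ba] [s /andP[s1 s2] <-] [t /andP[t1 t2]] /(Finj_win HJ (s0:=a)) h.
have : t = s by apply: h; apply/andP; split; lra.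
lra.
Qed.

Lemma carc_cases (a b : R) p : a <= b -> clarc a b p -> [\/ p = F a, p = F b | oarc a b p].
Proof.
move=> ab [t /andP[t1 t2] <-].
have [ta | at'] := eqVneq t a; first by rewrite ta; apply: Or31.
have [tb | bt] := eqVneq t b; first by rewrite tb; apply: Or32.
apply: Or33; exists t => //; apply/andP; split; rewrite lt_neqAle ?at' ?t1 //.
by rewrite eq_sym at'.
by rewrite bt t2.
Qed.

Lemma arc_carc (a b : R) : oarc a b `<=` clarc a b.
Proof. by move=> p [t /andP[? ?] <-]; exists t => //; apply/andP; split; lra. Qed.

Lemma Fa_carc (a b : R) : a <= b -> clarc a b (F a) /\ clarc a b (F b).
Proof. by move=> ab; split; [exists a|exists b] => //; apply/andP; split; lra. Qed.

Lemma dicho (a b : R) (h : R -> P) : a < b <= a + 1 -> continuous h ->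
  (forall u, a < u < b -> [/\ G (h u), h u <> F a & h u <> F b]) ->
  (forall u, a < u < b -> oarc a b (h u)) \/ (forall u, a < u < b -> oarc b (a + 1) (h u)).
Proof.
move=> hab ch hh; have /andP[ab ba] := hab.
have hm : a < (a + b) / 2 < b by apply/andP; split; lra.
have [G0 n1 n2] := hh _ hm.
have pre : forall a' b', closed (h @^-1` clarc a' b').
  move=> a' b'; apply: preimage_closed; last exact: closed_carc.
  by move=> u _; exact: ch.
have [//|//|hA|hC] := split3 hab G0.
- left; apply: (conn_R (U1 := h @^-1` clarc b (a + 1)) (U2 := h @^-1` clarc a b)) => //.
  + move=> u hu; have [Gu u1 u2] := hh u hu; split.
    * move=> hA' hC'; have [hh'|hh'|hh'] := carc_cases (a:=b) (b:=a+1) ltac:(lra) hC'.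
      -- by apply: u2.
      -- by apply: u1; rewrite hh' F1.
      -- exact: (arc_disj hab hA').
    * move=> nC; have [//|//|//|hC'] := split3 hab Gu.
      by case: nC; apply: arc_carc.
  + move=> u hu; have [Gu u1 u2] := hh u hu; split; first exact: arc_carc.
    by move=> /(carc_cases (a:=a) (b:=b) ltac:(lra)); case.
  + by exists ((a + b) / 2).
- right; apply: (conn_R (U1 := h @^-1` clarc a b) (U2 := h @^-1` clarc b (a + 1))) => //.
  + move=> u hu; have [Gu u1 u2] := hh u hu; split.
    * move=> hC' hA'; have [hh'|hh'|hh'] := carc_cases (a:=a) (b:=b) ltac:(lra) hA'; try done.
      exact: (arc_disj hab hh').
    * move=> nA; have [//|//|hA'|//] := split3 hab Gu.
      by case: nA; apply: arc_carc.
  + move=> u hu; have [Gu u1 u2] := hh u hu; split; first exact: arc_carc.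
    move=> /(carc_cases (a:=b) (b:=a+1) ltac:(lra)); case => //.
    by rewrite F1.
  + by exists ((a + b) / 2).
Qed.

End Arcs.


Section Dyn.
Variable R : realType.
Variables x y : R -> R.
Hypothesis HJ : smooth_jordan_param x y.
Local Notation F := (param x y).
Local Notation G := (curve x y).
Local Notation P := (R * R)%type.

Lemma pc_arc (a b : R) p : a < b < a + 1 -> pos_cyclic x y (F a) p (F b) -> oarc x y a b p.
Proof.
move=> /andP[ab ba] [s1 [s2 [s3 [[h12 h23 h31] [e1 e2 e3]]]]].
have [k ek] := Feq HJ e1.
have f3 : F (s3 - k%:~R) = F b by rewrite -intrN Fz.
have s3b : s3 - k%:~R = b.
  by apply: (Finj_win HJ (s0 := a)) => //; apply/andP; split; lra.
exists (s2 - k%:~R); last by rewrite -intrN Fz.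
apply/andP; split; lra.
Qed.

Lemma iterG (f : P -> P) n t : (forall t, G t -> G (f t)) -> G t -> G (iter n f t).
Proof. by move=> hf Gt; elim: n => //= n IH; apply: hf. Qed.

Lemma iter_inv (f g : P -> P) n t : (forall t, G t -> G (g t)) ->
  (forall t, G t -> f (g t) = t) -> G t -> iter n f (iter n g t) = t.
Proof.
move=> hg hfg; elim: n t => //= n IH t Gt.
have -> : f (iter n f (g (iter n g t))) = iter n f (f (g (iter n g t))) by rewrite -iterSr.
rewrite hfg; first exact: IH.
exact: iterG.
Qed.

Lemma iter_cont (f : P -> P) n : (forall t, G t -> G (f t)) -> {within G, continuous f} ->
  continuous (iter n f \o F).
Proof.
move=> hf cf; elim: n => [|n IH] /=; first exact: F_cont.
apply: (compW (h := iter n f \o F)) IH _ cf => u /=; apply: iterG => //; exact: F_G.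
Qed.

Lemma pres_iter (f : P -> P) n : preserves_orientation x y f ->
  preserves_orientation x y (iter n f).
Proof.
move=> hf; elim: n => [|n IH] a b c h //=.
by apply: hf; apply: IH.
Qed.


Lemma dicho2 (g : P -> P) (a b : R) : a < b < a + 1 -> continuous (g \o F) ->
  (forall t, oarc x y a b t \/ oarc x y b (a + 1) t -> [/\ G (g t), g t <> F a & g t <> F b]) ->
  ((g @` oarc x y a b `<=` oarc x y a b) \/ (g @` oarc x y a b `<=` oarc x y b (a + 1))) /\
  ((g @` oarc x y b (a + 1) `<=` oarc x y b (a + 1)) \/ (g @` oarc x y b (a + 1) `<=` oarc x y a b)).
Proof.
move=> /andP[ab ba] cg hg; split.
- have [] := dicho HJ (a := a) (b := b) (h := g \o F) ltac:(apply/andP; split; lra) cg.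
  + move=> u hu; apply: hg; left; by exists u.
  + by move=> h; left => _ [t [u hu <-] <-]; apply: h.
  + by move=> h; right => _ [t [u hu <-] <-]; apply: h.
- have [] := dicho HJ (a := b) (b := a + 1) (h := g \o F) ltac:(apply/andP; split; lra) cg.
  + move=> u hu; rewrite F1 //; have [h1 h2 h3] := hg (F u) ltac:(right; by exists u).
    by split.
  + by move=> h; left => _ [t [u hu <-] <-]; apply: h.
  + by move=> h; right => _ [t [u hu <-] <-]; rewrite -(arc_shift HJ); apply: h.
Qed.

End Dyn.


Section Inv.
Variable R : realType.
Variables x y : R -> R.
Hypothesis HJ : smooth_jordan_param x y.
Local Notation F := (param x y).
Local Notation G := (curve x y).
Local Notation P := (R * R)%type.
Variables alpha beta : P -> P.
Variable m : nat.
Hypothesis haG : forall t, G t -> G (alpha t).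
Hypothesis hbG : forall t, G t -> G (beta t).
Hypothesis hba : forall t, G t -> beta (alpha t) = t.
Hypothesis hab : forall t, G t -> alpha (beta t) = t.
Hypothesis hac : {within G, continuous alpha}.
Hypothesis hbc : {within G, continuous beta}.
Hypothesis hm : is_shift_order x y alpha m.
Local Notation am := (iter m alpha).
Local Notation bm := (iter m beta).
Local Notation A a b := (oarc x y a b).

Lemma amG t : G t -> G (am t). Proof. exact: iterG. Qed.
Lemma bmG t : G t -> G (bm t). Proof. exact: iterG. Qed.
Lemma am_bm t : G t -> am (bm t) = t. Proof. exact: iter_inv. Qed.
Lemma bm_am t : G t -> bm (am t) = t. Proof. exact: iter_inv. Qed.
Lemma am_inj s t : G s -> G t -> am s = am t -> s = t.
Proof. by move=> Gs Gt e; rewrite -(bm_am Gs) e bm_am. Qed.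
Lemma a_inj s t : G s -> G t -> alpha s = alpha t -> s = t.
Proof. by move=> Gs Gt e; rewrite -(hba Gs) e hba. Qed.
Lemma am_cont : continuous (am \o F). Proof. exact: iter_cont. Qed.
Lemma am_alpha t : am (alpha t) = alpha (am t).
Proof. by rewrite -iterSr iterS. Qed.

Lemma am_avoid t c : G t -> G c -> am c = c -> t <> c -> am t <> c.
Proof. by move=> Gt Gc fc tc e; apply: tc; apply: am_inj => //; rewrite e fc. Qed.

Lemma arcG a b t : A a b t -> G t.
Proof. by case=> u _ <-; exact: F_G. Qed.

Lemma am_dicho2 (a b : R) : a < b < a + 1 -> am (F a) = F a -> am (F b) = F b ->
  ((am @` A a b `<=` A a b) \/ (am @` A a b `<=` A b (a + 1))) /\
  ((am @` A b (a + 1) `<=` A b (a + 1)) \/ (am @` A b (a + 1) `<=` A a b)).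
Proof.
move=> hab' fa fb; have /andP[ab ba] := hab'.
apply: dicho2 => //; first exact: am_cont.
move=> t hA; have Gt : G t by case: hA => /arcG.
have [na nb] : t <> F a /\ t <> F b.
  case: hA => hA.
  - by apply: (arc_not_end HJ) hA; apply/andP; split; lra.
  - have [h1 h2] := arc_not_end HJ (a := b) (b := a + 1) ltac:(apply/andP; split; lra) hA.
    by split => //; rewrite -(F1 HJ).
split; first exact: amG.
- by apply: am_avoid => //; exact: F_G.
- by apply: am_avoid => //; exact: F_G.
Qed.


Lemma noC (a b : R) : a < b < a + 1 -> am (F a) = F a -> am (F b) = F b ->
  ~ (am @` A a b `<=` A b (a + 1)).
Proof.
move=> hab' fa fb hC; have /andP[ab ba] := hab'.
have hab2 : a < b <= a + 1 by apply/andP; split; lra.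
pose u0 := (a + b) / 2.
have hu0 : a < u0 < b by apply/andP; rewrite /u0; split; lra.
have Au0 : A a b (F u0) by exists u0.
have [n0a n0b] := arc_not_end HJ hab2 Au0.
have Cu0 : A b (a + 1) (am (F u0)) by apply: hC; exists (F u0).
have [dA dC] := am_dicho2 hab' fa fb.
have disj : forall t, A a b t -> A b (a + 1) t -> False.
  by move=> t; exact: (arc_disj HJ hab2).
have [pres|npres] := pselect (preserves_orientation x y alpha).
  have pc : pos_cyclic x y (F a) (F u0) (F b).
    by exists a, u0, b; split; [split; lra | split].
  have := pres_iter m pres pc; rewrite fa fb => /(pc_arc HJ hab') hA.
  exact: disj hA Cu0.
have m2 : m = 2%N := hm.2 npres.
have [[z [[Az|Cz] fz]]|nofix] :=
  pselect (exists z, (A a b z \/ A b (a + 1) z) /\ am z = z).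
- have : A b (a + 1) (am z) by apply: hC; exists z.
  by rewrite fz => /(disj _ Az).
- have CC : am @` A b (a + 1) `<=` A b (a + 1).
    case: dC => // hCA; have : A a b (am z) by apply: hCA; exists z.
    by rewrite fz => /disj /(_ Cz).
  pose s := bm (F u0).
  have Gs : G s by apply: bmG; exact: F_G.
  have es : am s = F u0 by apply: am_bm; exact: F_G.
  have sa : s <> F a by move=> e; move: es; rewrite e fa => e'; exact: n0a (esym e').
  have sb : s <> F b by move=> e; move: es; rewrite e fb => e'; exact: n0b (esym e').
  case: (split3 HJ hab2 Gs) => [//|//|As|Cs].
  + have : A b (a + 1) (am s) by apply: hC; exists s.
    by rewrite es => /(disj _ Au0).
  + have : A b (a + 1) (am s) by apply: CC; exists s.
    by rewrite es => /(disj _ Au0).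
- have fixback : forall t, G t -> am (alpha t) = alpha t -> am t = t.
    move=> t Gt e; apply: a_inj => //; first exact: amG.
    by rewrite -am_alpha.
  have aend : forall t, (A a b t \/ A b (a + 1) t) ->
      [/\ G (alpha t), alpha t <> F a & alpha t <> F b].
    move=> t hA; have Gt : G t by case: hA => /arcG.
    split; first exact: haG.
    + move=> e; apply: nofix; exists t; split => //; apply: fixback => //.
      by rewrite e fa.
    + move=> e; apply: nofix; exists t; split => //; apply: fixback => //.
      by rewrite e fb.
  have [dA' dC'] := dicho2 HJ (g := alpha) hab' (compW (F_cont HJ) (@F_G _ x y) hac) aend.
  have aa : forall t, alpha (alpha t) = am t by move=> t; rewrite m2.
  have afix : forall c, c = F a \/ c = F b -> alpha c = F a \/ alpha c = F b.
    move=> c hc; have Gc : G c by case: hc => ->; exact: F_G.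
    have fc : am c = c by case: hc => ->.
    have Gac := haG Gc.
    have fac : am (alpha c) = alpha c by rewrite am_alpha fc.
    case: (split3 HJ hab2 Gac) => [->|->|h|h]; [by left|by right| |].
    + by case: nofix; exists (alpha c); split => //; left.
    + by case: nofix; exists (alpha c); split => //; right.
  case: dA' => [hAA | hAC].
  + have A1 : A a b (alpha (F u0)) by apply: hAA; exists (F u0).
    have A2 : A a b (alpha (alpha (F u0))) by apply: hAA; exists (alpha (F u0)).
    by rewrite aa in A2; exact: disj A2 Cu0.
  + case: dC' => [hCC | hCA].
    * pose s := beta (F u0).
      have Gs : G s by apply: hbG; exact: F_G.
      have es : alpha s = F u0 by apply: hab; exact: F_G.
      have sa : s <> F a.
        move=> e; have := afix s (or_introl e); rewrite es.
        by case => e'; [exact: (n0a e') | exact: (n0b e')].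
      have sb : s <> F b.
        move=> e; have := afix s (or_intror e); rewrite es.
        by case => e'; [exact: (n0a e') | exact: (n0b e')].
      case: (split3 HJ hab2 Gs) => [//|//|As|Cs].
      -- have : A b (a + 1) (alpha s) by apply: hAC; exists s.
         by rewrite es => /(disj _ Au0).
      -- have : A b (a + 1) (alpha s) by apply: hCC; exists s.
         by rewrite es => /(disj _ Au0).
    * have C1 : A b (a + 1) (alpha (F u0)) by apply: hAC; exists (F u0).
      have A2 : A a b (alpha (alpha (F u0))) by apply: hCA; exists (alpha (F u0)).
      by rewrite aa in A2; exact: disj A2 Cu0.
Qed.

Lemma INV (a b : R) : a < b <= a + 1 -> am (F a) = F a -> am (F b) = F b ->
  am @` A a b = A a b.
Proof.
move=> hab2 fa fb; have /andP[ab ba] := hab2.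
have [bl|be] := ltP b (a + 1).
- have hab' : a < b < a + 1 by apply/andP; split.
  have disj : forall t, A a b t -> A b (a + 1) t -> False.
    by move=> t; exact: (arc_disj HJ hab2).
  have [dA dC] := am_dicho2 hab' fa fb.
  have AA : am @` A a b `<=` A a b by case: dA => // /(noC hab' fa fb).
  apply/seteqP; split => // t At.
  have Gt : G t by apply: arcG At.
  have [nta ntb] := arc_not_end HJ hab2 At.
  pose s := bm t.
  have Gs : G s by apply: bmG.
  have es : am s = t by apply: am_bm.
  have sa : s <> F a by move=> e; apply: nta; rewrite -es e fa.
  have sb : s <> F b by move=> e; apply: ntb; rewrite -es e fb.
  case: (split3 HJ hab2 Gs) => [//|//|As|Cs]; first by exists s.
  case: dC => [hCC|hCA].
  + have : A b (a + 1) (am s) by apply: hCC; exists s.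
    by rewrite es => /(disj _ At).
  + exfalso.
    pose v := (b + (a + 1)) / 2.
    have hv : b < v < a + 1 by apply/andP; rewrite /v; split; lra.
    have Cv : A b (a + 1) (F v) by exists v.
    have [nva nvb] := arc_not_end HJ (a := b) (b := a + 1) ltac:(apply/andP; split; lra) Cv.
    pose c := bm (F v).
    have Gc : G c by apply: bmG; exact: F_G.
    have ec : am c = F v by apply: am_bm; exact: F_G.
    have ca : c <> F a by move=> e; apply: nvb; rewrite -ec e fa F1.
    have cb : c <> F b by move=> e; apply: nva; rewrite -ec e fb.
    case: (split3 HJ hab2 Gc) => [//|//|Ac|Cc].
    * have : A a b (am c) by apply: AA; exists c.
      by rewrite ec => /disj /(_ Cv).
    * have : A a b (am c) by apply: hCA; exists c.
      by rewrite ec => /disj /(_ Cv).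
- have eb : b = a + 1 by apply/eqP; rewrite eq_le ba be.
  have fa' : F b = F a by rewrite eb F1.
  have noE : forall p, ~ A b (a + 1) p by rewrite eb => p [u /andP[u1 u2] _]; lra.
  apply/seteqP; split => t.
  + case=> p Ap <-.
    have Gp : G p by apply: arcG Ap.
    have [npa npb] := arc_not_end HJ hab2 Ap.
    have ne : am p <> F a by apply: am_avoid => //; exact: F_G.
    case: (split3 HJ hab2 (amG Gp)) => [//|e|//|/noE//].
    by case: ne; rewrite e fa'.
  + move=> At; have Gt : G t by apply: arcG At.
    have [nta ntb] := arc_not_end HJ hab2 At.
    pose s := bm t.
    have Gs : G s by apply: bmG.
    have es : am s = t by apply: am_bm.
    have sa : s <> F a by move=> e; apply: nta; rewrite -es e fa.
    have sb : s <> F b by move=> e; apply: ntb; rewrite -es e fb.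
    case: (split3 HJ hab2 Gs) => [//|//|As|/noE//].
    by exists s.
Qed.

End Inv.


Section Misc.
Variable R : realType.
Local Notation P := (R * R)%type.

Lemma fin_nolp (Y : set P) p : finite_set Y -> ~ limit_point Y p.
Proof.
case/finite_seqP => s ->; elim: s => [|a s IH] lp.
  by have [z [_ /= zs _]] := lp setT filterT.
apply: IH => U hU.
have [ap|ap] := eqVneq a p.
  have [z [zp /= zs Uz]] := lp U hU; exists z; split => //.
  by move: zs; rewrite in_cons => /orP[/eqP za|//]; move: zp; rewrite za ap eqxx.
have hU' : nbhs p (U `&` ~` [set a]).
  apply: filterI => //; apply: open_nbhs_nbhs; split.
  + apply: closed_openC; apply: accessible_closed_set1; apply: hausdorff_accessible.
    exact: hausP.
  + by move=> /= pa; move: ap; rewrite pa eqxx.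
have [z [zp /= zs [Uz za]]] := lp _ hU'; exists z; split => //.
by move: zs; rewrite in_cons => /orP[/eqP za'|//].
Qed.

Lemma pd_of (l : seq (set P)) : uniq l ->
  (forall A B, A \in l -> B \in l -> A <> B -> A `&` B = set0) -> pairwise_disjoint l.
Proof.
move=> ul h i j il jl ij; apply: h; try exact: mem_nth.
by move=> /eqP; rewrite nth_uniq // => /eqP.
Qed.

Lemma compW' (T : topologicalType) (G : set P) (g : P -> T) (h : R -> P) : continuous h ->
  (forall u, G (h u)) -> {within G, continuous g} -> continuous (g \o h).
Proof.
move=> ch hG cg u.
have := (subspace_continuousP _ _).1 cg (h u) (hG u).
apply: cvg_comp; intros W hW.
have H1 : nbhs (h u) [set z | G z -> W z] by exact: hW.
have H2 : nbhs u (h @^-1` [set z | G z -> W z]) by apply: ch.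
apply: (filterS _ H2) => v /= hv; exact: hv.
Qed.

End Misc.

Section Curve2.
Variable R : realType.
Variables x y : R -> R.
Hypothesis HJ : smooth_jordan_param x y.
Local Notation F := (param x y).
Local Notation G := (curve x y).
Local Notation P := (R * R)%type.

Lemma lpZY (Y : set P) u : limit_point [set v | Y (F v)] u -> limit_point Y (F u).
Proof.
move=> lp U hU.
have h1 : nbhs u (F @^-1` U) by apply: F_cont.
have h2 : nbhs u (ball u (1/2)) by apply: nbhsx_ballx.
have [z [zu Yz [Uz bz]]] := lp _ (filterI h1 h2).
exists (F z); split => //; apply/eqP => e.
move: bz; rewrite ballR => bz.
have : z = u.
  apply: (Finj_win HJ (s0 := u - 1/2)) => //; apply/andP; split;
  rewrite ?ltr_norml in bz; try lra.
  all: move: bz; rewrite ltr_norml => /andP[? ?]; lra.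
Qed.

Lemma F_closure (a b u : R) : a < b -> a <= u <= b -> closure (oarc x y a b) (F u).
Proof.
move=> ab /andP[au ub] B hB.
have : nbhs u (F @^-1` B) by apply: F_cont.
move=> /nbhs_ballP [e /= e0 he].
have [w hw bw] : exists2 w, a < w < b & `|u - w| < e.
  have [ub'|bu] := ltP u b.
  - pose q := Num.min (u + e) b.
    have q1 : q <= u + e by rewrite ge_min lexx.
    have q2 : q <= b by rewrite ge_min lexx orbT.
    have q3 : u < q by rewrite lt_min; apply/andP; split; lra.
    exists ((u + q) / 2); first by apply/andP; split; lra.
    rewrite ler0_norm; lra.
  - pose q := Num.max (u - e) a.
    have q1 : u - e <= q by rewrite le_max lexx.
    have q2 : a <= q by rewrite le_max lexx orbT.
    have q3 : q < u by rewrite gt_max; apply/andP; split; lra.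
    exists ((u + q) / 2); first by apply/andP; split; lra.
    rewrite ger0_norm; lra.
exists (F w); split; first by exists w.
by apply: he; rewrite ballR.
Qed.

Lemma closure_sub (a b : R) : closure (oarc x y a b) `<=` clarc x y a b.
Proof.
have := closed_carc HJ (a:=a) (b:=b).
move=> /closure_id ->; apply: closureS; exact: arc_carc.
Qed.

End Curve2.


Section Main.
Variable R : realType.
Variables x y : R -> R.
Hypothesis HJ : smooth_jordan_param x y.
Local Notation F := (param x y).
Local Notation G := (curve x y).
Local Notation P := (R * R)%type.
Variables alpha beta : P -> P.
Variable m : nat.
Hypothesis haG : forall t, G t -> G (alpha t).
Hypothesis hbG : forall t, G t -> G (beta t).
Hypothesis hba : forall t, G t -> beta (alpha t) = t.
Hypothesis hab : forall t, G t -> alpha (beta t) = t.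
Hypothesis hac : {within G, continuous alpha}.
Hypothesis hbc : {within G, continuous beta}.
Hypothesis hm : is_shift_order x y alpha m.
Local Notation am := (iter m alpha).
Local Notation Lam := (Lambda G alpha m).
Local Notation Ph := (Phi G alpha m).
Local Notation Y := (Ybd G alpha m).
Local Notation Z := [set u | Y (F u)].

Lemma Z_iff u : Y (F u) <-> am (F u) = F u /\ Ph (F u).
Proof.
split; first by case=> -[_ e] hp.
by case=> e hp; split => //; split => //; exact: F_G.
Qed.

Lemma closedZ : closed Z.
Proof.
have -> : Z = [set u | am (F u) = F u] `&` F @^-1` Ph.
  by apply/seteqP; split => u /Z_iff.
apply: closedI.
- apply: closed_eqz; [exact: am_cont | exact: F_cont].
- apply: preimage_closed; last exact: closed_closure.
  by move=> u _; exact: F_cont.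
Qed.

Lemma notPh_fix u : ~ Ph (F u) -> am (F u) = F u.
Proof.
move=> nP; apply: contra_notP nP => ne; apply: subset_closure; split => //.
exact: F_G.
Qed.

Lemma classify (a b : R) : a < b -> (forall t, a < t < b -> ~ Z t) ->
  (oarc x y a b `<=` G `\` Ph) \/ (oarc x y a b `<=` Ph `\` Lam).
Proof.
move=> ab zf.
have hm2 : a < (a + b) / 2 < b by apply/andP; split; lra.
have cS : closed [set u | am (F u) = F u].
  apply: closed_eqz; [exact: am_cont | exact: F_cont].
have cP : closed (F @^-1` Ph).
  apply: preimage_closed; last exact: closed_closure.
  by move=> u _; exact: F_cont.
have [S0|nS0] := pselect (am (F ((a + b) / 2)) = F ((a + b) / 2)).
- left.
  have all : forall u, a < u < b -> am (F u) = F u.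
    apply: (conn_R (U1 := F @^-1` Ph) (U2 := [set u | am (F u) = F u])) => //.
    + move=> u hu; split.
      * by move=> e hP; apply: (zf u hu); apply/Z_iff.
      * exact: notPh_fix.
    + by exists ((a + b) / 2).
  move=> _ [u hu <-]; split; first exact: F_G.
  by move=> hP; apply: (zf u hu); apply/Z_iff; split => //; apply: all.
- right.
  have all : forall u, a < u < b -> am (F u) <> F u.
    apply: (conn_R (S := [set u | am (F u) <> F u])
      (U1 := [set u | am (F u) = F u]) (U2 := F @^-1` Ph)) => //.
    + move=> u hu; split => /=.
      * by move=> ne; apply: contra_notP ne => /notPh_fix.
      * by move=> hP e; apply: (zf u hu); apply/Z_iff.
    + by exists ((a + b) / 2).
  move=> _ [u hu <-]; split.
  + by apply: contra_notP (all u hu) => /notPh_fix.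
  + by case=> _ e; apply: (all u hu).
Qed.


Lemma construct (Pos : set R) (s0 : R) : Y (F s0) ->
  (forall u, limit_point Z u -> exists2 d, 0 < d & forall t, `|t - u| < d -> Pos t) ->
  exists ws gs vs : seq (set P),
    [/\ forall w, w \in ws -> [/\ w `<=` G `\` Ph, shift_invariant am w & arc_ends_in x y Y w],
        forall g, g \in gs -> [/\ g `<=` Ph `\` Lam, shift_invariant am g & arc_ends_in x y Y g],
        forall v, v \in vs -> [/\ v `<=` G, shift_invariant am v, arc_ends_in x y Y v &
            exists a b u, [/\ v = oarc x y a b, a < b, a <= u <= b, limit_point Z u &
                               forall t, a <= t <= b -> Pos t]],
        pairwise_disjoint (ws ++ gs ++ vs) &
        G = union_closures (ws ++ gs ++ vs)].
Proof.
move=> Y0 H.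
have Z0 : Z s0 by [].
have Z1 : Z (s0 + 1) by rewrite /= F1.
have [L0 [h1 h2 h3]] := partitionR (Z := Z) (Pos := Pos) (s0 := s0) (s1 := s0 + 1) closedZ Z0 Z1 ltac:(lra) H.
pose L := undup L0.
pose arcof (p : R * R) := oarc x y p.1 p.2.
pose zfree (p : R * R) := forall t, p.1 < t < p.2 -> ~ Z t.
pose cls (p : R * R) : nat :=
  if `[< zfree p >] then (if `[< arcof p `<=` G `\` Ph >] then 0%N else 1%N) else 2%N.
pose ws := map arcof [seq p <- L | cls p == 0%N].
pose gs := map arcof [seq p <- L | cls p == 1%N].
pose vs := map arcof [seq p <- L | cls p == 2%N].
have fixZ : forall t, Z t -> am (F t) = F t by move=> t /Z_iff [].
have pinv : forall p, p \in L0 -> shift_invariant am (arcof p).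
  move=> p pL; have [q1 q2 q3 [z1 z2] _] := h1 p pL.
  apply: (INV HJ haG hbG hba hab hac hm); last exact: fixZ.
  + apply/andP; split; lra.
  + exact: fixZ.
have pends : forall p, p \in L0 -> arc_ends_in x y Y (arcof p).
  move=> p pL; have [q1 q2 q3 [z1 z2] _] := h1 p pL.
  exists (F p.1), (F p.2); split => //.
  by exists p.1, p.2; split => //; lra.
have inL : forall (c : nat) A, A \in map arcof [seq p <- L | cls p == c] ->
    exists2 p, p \in L0 & A = arcof p /\ cls p = c.
  move=> c A /mapP [p]; rewrite mem_filter => /andP[/eqP cp]; rewrite mem_undup => pL ->.
  by exists p.
have inAll : forall A, A \in ws ++ gs ++ vs -> exists2 p, p \in L0 & A = arcof p.
  move=> A; rewrite !mem_cat => /orP[/inL [p ? [? _]]|/orP[/inL [p ? [? _]]|/inL [p ? [? _]]]];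
  by exists p.
have arcdisj : forall p q, p \in L0 -> q \in L0 -> p != q -> arcof p `&` arcof q = set0.
  move=> p q pL qL pq; apply/seteqP; split => // t [[u /andP[u1 u2] <-] [v /andP[v1 v2] e]].
  have [p1 p2 p3 _ _] := h1 p pL; have [q1 q2 q3 _ _] := h1 q qL.
  have uv : v = u by apply: (Finj_win HJ (s0:=s0)) => //; apply/andP; split; lra.
  apply: (h2 p q pL qL pq u); apply/andP; split; lra.
have arcne : forall p, p \in L0 -> arcof p (F ((p.1 + p.2) / 2)).
  move=> p pL; have [p1 p2 p3 _ _] := h1 p pL.
  by exists ((p.1 + p.2) / 2) => //; apply/andP; split; lra.
have arcinj : {in L0 &, injective arcof}.
  move=> p q pL qL e; apply/eqP; apply/negPn/negP => pq.
  have := arcdisj p q pL qL pq; rewrite e setIid => h.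
  by have := arcne q qL; rewrite h.
have memall : forall q, q \in L0 -> arcof q \in ws ++ gs ++ vs.
  move=> q qL; have qL' : q \in L by rewrite mem_undup.
  rewrite !mem_cat; have : (cls q == 0%N) || (cls q == 1%N) || (cls q == 2%N).
    by rewrite /cls; case: asboolP => _; [case: asboolP|].
  move=> /orP[/orP[c|c]|c].
  - by apply/orP; left; apply: map_f; rewrite mem_filter c.
  - by apply/orP; right; apply/orP; left; apply: map_f; rewrite mem_filter c.
  - by apply/orP; right; apply/orP; right; apply: map_f; rewrite mem_filter c.
exists ws, gs, vs; split.
- move=> w /inL [p pL [-> cp]]; split; [|exact: pinv|exact: pends].
  move: cp; rewrite /cls; case: asboolP => // _; case: asboolP => //.
- move=> g /inL [p pL [-> cp]]; split; [|exact: pinv|exact: pends].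
  move: cp; rewrite /cls; case: asboolP => // zp; case: asboolP => // nw _.
  have [q1 q2 q3 _ _] := h1 p pL.
  by case: (classify q2 zp).
- move=> v /inL [p pL [-> cp]]; split; [|exact: pinv|exact: pends|].
  + by move=> t [u _ <-]; exact: F_G.
  + move: cp; rewrite /cls; case: asboolP => [zp|nz _]; first by case: asboolP.
    have [q1 q2 q3 _ [//|[hP [u hu lu]]]] := h1 p pL.
    by exists p.1, p.2, u; split.
- apply: pd_of.
  + rewrite /ws /gs /vs -!map_cat map_inj_in_uniq.
    * rewrite !cat_uniq !filter_uniq ?undup_uniq //=; apply/and3P; split.
      -- apply/hasPn => p; rewrite mem_cat !mem_filter => /orP[/andP[/eqP c _]|/andP[/eqP c _]];
         by rewrite c.
      -- apply/hasPn => p; rewrite !mem_filter => /andP[/eqP c _]; by rewrite c.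
      -- by [].
    * move=> p q; rewrite !mem_cat !mem_filter !mem_undup.
      move=> /orP[/andP[_ pL]|/orP[/andP[_ pL]|/andP[_ pL]]];
      move=> /orP[/andP[_ qL]|/orP[/andP[_ qL]|/andP[_ qL]]]; exact: arcinj.
  + move=> A B /inAll [p pL ->] /inAll [q qL ->] ne; apply: arcdisj => //.
    by apply/eqP => pq; apply: ne; rewrite pq.
- apply/seteqP; split.
  + move=> pt Gp; have [t /andP[t1 t2] et] := G_win HJ s0 Gp.
    have [t' [ht' et']] : exists t', (s0 < t' <= s0 + 1) /\ F t' = pt.
      have [ts|ts] := eqVneq t s0.
      * by exists (s0 + 1); split; [apply/andP; split; lra | rewrite F1 // -ts].
      * exists t; split => //; apply/andP; split; last lra.
        by rewrite lt_neqAle eq_sym ts t1.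
    have [q qL /andP[q1 q2]] := h3 t' ht'.
    exists (arcof q); first exact: memall.
    have [_ qq _ _ _] := h1 q qL.
    rewrite -et'; apply: F_closure => //; apply/andP; split; lra.
  + move=> pt [A /inAll [p pL ->] cl].
    by have [u _ <-] := closure_sub HJ cl; exact: F_G.
Qed.

End Main.

Unset Implicit Arguments.

Theorem lemma2p5 (R : realType) (x y : R -> R) (alpha : R * R -> R * R) (m : nat) :
  smooth_jordan_param x y ->
  homeo_on (curve x y) alpha ->
  periodic_points (curve x y) alpha !=set0 ->
  is_shift_order x y alpha m ->
  let G := curve x y in
  let am := iter m alpha in
  let Lam := Lambda G alpha m in
  let Ph := Phi G alpha m in
  let Y := Ybd G alpha m in
  let Y' := limit_point Y in
  (* (a) *)
  (finite_set Y -> Y !=set0 ->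
    exists ws gs : seq (set (R * R)),
      [/\ forall w, w \in ws -> [/\ w `<=` G `\` Ph, shift_invariant am w & arc_ends_in x y Y w],
          forall g, g \in gs -> [/\ g `<=` Ph `\` Lam, shift_invariant am g & arc_ends_in x y Y g],
          pairwise_disjoint (ws ++ gs) &
          G = union_closures (ws ++ gs)]) /\
  (* (b) *)
  (forall f : R * R -> R, {within G, continuous f} ->
    infinite_set Y -> (forall tau, Y' tau -> 0 < f tau) ->
    exists ws gs vs : seq (set (R * R)),
      [/\ forall w, w \in ws -> [/\ w `<=` G `\` Ph, shift_invariant am w & arc_ends_in x y Y w],
          forall g, g \in gs -> [/\ g `<=` Ph `\` Lam, shift_invariant am g & arc_ends_in x y Y g],
          forall v, v \in vs -> [/\ v `<=` G, shift_invariant am v, arc_ends_in x y Y v,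
                                   closure v `&` Y' !=set0 &
                                   forall t, closure v t -> 0 < f t],
          pairwise_disjoint (ws ++ gs ++ vs) &
          G = union_closures (ws ++ gs ++ vs)]).
Proof.
move=> HJ [beta [[haG hbG hba hab] [hac hbc]]] _ hm G am Lam Ph Y Y'.
have Ystart : Y !=set0 -> exists s0, Y (param x y s0).
  move=> [y0 Yy0]; have Gy0 : G y0 by case: Yy0 => -[].
  have [s0 _ e] := G_win HJ 0 Gy0.
  by exists s0; rewrite e.
split.
- move=> finY /Ystart [s0 Ys0].
  have [ws [gs [vs [hw hg hv pd cov]]]] :=
    construct HJ haG hbG hba hab hac hm (Pos := set0) Ys0
      (fun u lp => False_ind _ (fin_nolp finY (lpZY HJ lp))).
  have vs0 : vs = [::].
    case: vs hv {pd cov} => // v vs' hv.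
    have [_ _ _ [a [b [u [_ _ _ lp _]]]]] := hv v (mem_head _ _).
    by case: (fin_nolp finY (lpZY HJ lp)).
  rewrite vs0 cats0 in pd cov.
  by exists ws, gs; split.
- move=> f fc infY fpos.
  have [s0 Ys0] := Ystart (infinite_setN0 infY).
  pose Pos := [set u | 0 < f (param x y u)].
  have cfF : continuous (f \o param x y).
    apply: compW' (F_cont HJ) _ fc => u; exact: F_G.
  have H : forall u, limit_point [set v | Y (param x y v)] u ->
      exists2 d, 0 < d & forall t, `|t - u| < d -> Pos t.
    move=> u lp; have fu : 0 < f (param x y u) by apply: fpos; rewrite /Y'; exact: (lpZY HJ lp).
    have hn : nbhs u [set t | 0 < f (param x y t)].
      exact: (@cvgr_gt _ _ _ _ (f \o param x y) _ (cfF u) 0 fu).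
    have [d /= d0 hd] := (nbhs_ballP _ _).1 hn; exists d => // t tu.
    by apply: hd; rewrite ballR distrC.
  have [ws [gs [vs [hw hg hv pd cov]]]] :=
    construct HJ haG hbG hba hab hac hm (Pos := Pos) Ys0 H.
  exists ws, gs, vs; split => // v vv.
  have [h1 h2 h3 [a [b [u [ev ab hu lp hP]]]]] := hv v vv.
  rewrite ev in h1 h2 h3 *.
  split; [exact: h1|exact: h2|exact: h3| |].
  + exists (param x y u); split; first exact: F_closure.
    rewrite /Y'; exact: (lpZY HJ lp).
  + move=> t /(closure_sub HJ) [w hw0 <-]; exact: hP.
Qed.
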